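(* Let $T>0$, $Q_T=(0,\infty)\times(0,T)$, and let $m,n\in L^\infty(Q_T)$ be two nonnegative solutions of the Kompaneets problem whose initial data satisfy $x^2m_0(x)\to0$, $x^2n_0(x)\to0$ as $x\to\infty$. For any $0<r<R<\infty$ and any $0<s<t\le T$, \begin{align*} &\int_r^R|n_t(x)-m_t(x)|\,dx+\int_s^t\operatorname{sign}(n_\tau(r)-m_\tau(r))\big(J(r,n_\tau)-J(r,m_\tau)\big)\,d\tau\\ &\le\int_r^R|n_s(x)-m_s(x)|\,dx+\int_s^t\operatorname{sign}(n_\tau(R)-m_\tau(R))\big(J(R,n_\tau)-J(R,m_\tau)\big)\,d\tau. \end{align*}
   Context: The Kompaneets problem: for $x>0$, $t>0$, $\partial_t n = \partial_x J$ with $J(x,n) = x^2\partial_x n + (x^2-2x)n + n^2$ (here $J(x,n_\tau)$ is evaluated at $x$ and time $\tau$), together with $\lim_{x\to\infty} J(x,n_t)=0$; no boundary condition at $x=0$. $n_t(x)=n(x,t)$. Solutions are nonnegative, $C^{2,1}$ for $x,t>0$ and continuous in time with values in $L^1$. *)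

(* Defs.v *)
From HB Require Import structures.
From mathcomp Require Import all_boot all_order all_algebra.
From mathcomp Require Import all_classical all_reals all_analysis.
Set Implicit Arguments. Unset Strict Implicit. Unset Printing Implicit Defensive.
Import Order.TTheory GRing.Theory Num.Theory.
Import numFieldNormedType.Exports.
Local Open Scope classical_set_scope.
Local Open Scope ring_scope.

Section Kompaneets.
Variable R : realType.
Implicit Types (n : R -> R -> R). (* n x t *)

Definition dx n (x t : R) : R := derive1 (fun y => n y t) x.
Definition dt n (x t : R) : R := derive1 (fun s => n x s) t.

Definition J n (x t : R) : R :=
  x ^+ 2 * dx n x t + (x ^+ 2 - 2 * x) * n x t + n x t ^+ 2.

Definition jcont (F : R -> R -> R) (x t : R) : Prop :=
  (fun p : R * R => F p.1 p.2) @ (x, t) --> F x t.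

Definition C21 n : Prop :=
  forall x t : R, 0 < x -> 0 < t ->
    [/\ derivable (fun y => n y t) x 1,
        derivable (fun y => dx n y t) x 1,
        derivable (fun s => n x s) t 1,
        (jcont n x t /\ jcont (dx n) x t) &
        (jcont (dx (dx n)) x t /\ jcont (dt n) x t)].

Definition L1_continuous n : Prop :=
  (forall t : R, 0 <= t ->
     (@lebesgue_measure R).-integrable [set x : R | (0 < x)%R] (fun x => (n x t)%:E)) /\
  (forall t0 : R, 0 <= t0 -> forall e : R, 0 < e -> exists2 d : R, 0 < d &
     forall t : R, 0 <= t -> `|t - t0| < d ->
       (\int[@lebesgue_measure R]_(x in [set x : R | (0 < x)%R]) (`|n x t - n x t0|)%:E
         < e%:E)%E).

Definition kompaneets_solution (n0 : R -> R) n : Prop :=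
  [/\ forall x t : R, 0 < x -> 0 <= t -> 0 <= n x t,
      C21 n,
      L1_continuous n,
      forall x : R, 0 < x -> n x 0 = n0 x &
      ((forall x t : R, 0 < x -> 0 < t ->
        dt n x t = derive1 (fun y => J n y t) x) /\
      (forall t : R, 0 < t -> J n x t @[x --> +oo] --> 0))].

Definition Linfty_QT (T : R) n : Prop :=
  exists M : R, forall x t : R, 0 < x -> 0 < t < T -> `|n x t| <= M.

End Kompaneets.

(* Main.v *)
Require Import Defs.
From HB Require Import structures.
From mathcomp Require Import all_boot all_order all_algebra.
From mathcomp Require Import all_classical all_reals all_analysis.
From mathcomp Require Import ring lra.
Import Order.TTheory GRing.Theory Num.Theory.
Import numFieldNormedType.Exports.
Local Open Scope classical_set_scope.
Local Open Scope ring_scope.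

Module Aux.
Set Implicit Arguments. Unset Strict Implicit. Unset Printing Implicit Defensive.
Section K.
Variable R : realType.

Lemma is_derive_comp1 (f g : R -> R) (x df dg : R) :
  is_derive x 1 f df -> is_derive (f x) 1 g dg ->
  is_derive x 1 (fun y => g (f y)) (dg * df).
Proof.
move=> [hf <-] [hg <-].
have hc : derivable (g \o f) x 1.
  apply/derivable1_diffP; apply: differentiable_comp; exact/derivable1_diffP.
apply: DeriveDef; first exact: hc.
by rewrite -derive1E (derive1_comp hf hg) !derive1E.
Qed.

Lemma is_derive_cont (f : R -> R) (x df : R) :
  is_derive x 1 f df -> {for x, continuous f}.
Proof.
move=> [hf _]; apply: differentiable_continuous; exact/derivable1_diffP.
Qed.

Definition Phi (e v : R) := Num.sqrt (v ^+ 2 + e ^+ 2).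
Definition phi (e v : R) := v / Phi e v.
Definition phip (e v : R) := e ^+ 2 / Phi e v ^+ 3.
Definition hh (e v : R) := e ^+ 2 / Phi e v.

Lemma Phi_gt0 (e v : R) : 0 < e -> 0 < Phi e v.
Proof.
move=> e0; rewrite /Phi sqrtr_gt0; apply: ltr_wpDl; first exact: sqr_ge0.
by rewrite exprn_gt0.
Qed.

Lemma Phi_sqr (e v : R) : Phi e v ^+ 2 = v ^+ 2 + e ^+ 2.
Proof. by rewrite /Phi sqr_sqrtr // addr_ge0 // sqr_ge0. Qed.

Lemma is_derive_Phi (e v : R) : 0 < e -> is_derive v 1 (Phi e) (phi e v).
Proof.
move=> e0.
have h1 : is_derive v 1 (fun y : R => y ^+ 2 + e ^+ 2) (2 * v).
  apply: is_derive_eq.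
  by rewrite /GRing.scale /=; ring.
have h2 := @is_derive1_sqrt R (v ^+ 2 + e ^+ 2)
   ltac:(rewrite ltr_wpDl ?sqr_ge0 ?exprn_gt0 //).
have := is_derive_comp1 h1 h2.
move=> H.
have -> : Phi e = fun y => Num.sqrt (y ^+ 2 + e ^+ 2) by [].
apply: (is_derive_eq H); rewrite /phi /Phi.
have p0 := Phi_gt0 v e0; rewrite /Phi in p0.
by field; rewrite gt_eqF.
Qed.

Lemma is_deriveV1 (f : R -> R) (x df : R) :
  is_derive x 1 f df -> f x != 0 ->
  is_derive x 1 (fun y => (f y)^-1) (- (f x) ^- 2 * df).
Proof.
move=> [hf <-] fx0; apply: DeriveDef; first exact: derivableV.
by rewrite deriveV.
Qed.

Lemma is_derive_phi (e v : R) : 0 < e -> is_derive v 1 (phi e) (phip e v).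
Proof.
move=> e0.
have hP := is_derive_Phi v e0.
have p0 := Phi_gt0 v e0.
have hV := is_deriveV1 hP (negbT (gt_eqF p0)).
have hM := is_deriveM (@is_derive_id _ _ v 1) hV.
have -> : phi e = (id * (fun y => (Phi e y)^-1))%R.
  by apply/funext => y; rewrite /phi /= /GRing.mul /=.
apply: (is_derive_eq hM); rewrite /phip /phi /GRing.scale /=.
have := Phi_sqr e v; set P := Phi e v => hPs.
have -> : e ^+ 2 = P ^+ 2 - v ^+ 2 by rewrite hPs; ring.
by field; rewrite gt_eqF.
Qed.

Lemma is_derive_hh (e v : R) : 0 < e ->
  is_derive v 1 (hh e) (- (phip e v * v)).
Proof.
move=> e0.
have hP := is_derive_Phi v e0.
have p0 := Phi_gt0 v e0.
have hV := is_deriveV1 hP (negbT (gt_eqF p0)).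
have hM := is_deriveZ (e ^+ 2) hV.
have -> : hh e = (e ^+ 2 \*: (fun y => (Phi e y)^-1))%R.
  by apply/funext => y; rewrite /hh /=.
apply: (is_derive_eq hM); rewrite /phip /phi /GRing.scale /=.
by field; rewrite gt_eqF.
Qed.

Lemma Phi_ge (e v : R) : 0 <= e -> `|v| <= Phi e v.
Proof.
move=> e0; rewrite /Phi -(sqrtr_sqr v); apply: ler_wsqrtr.
by rewrite lerDl sqr_ge0.
Qed.

Lemma Phi_le (e v : R) : 0 <= e -> Phi e v <= `|v| + e.
Proof.
move=> e0; rewrite /Phi -(@ger0_norm _ (`|v| + e)) ?addr_ge0 //.
rewrite -sqrtr_sqr; apply: ler_wsqrtr.
rewrite sqrrD real_normK ?num_real //.
by rewrite -addrA lerD2l lerDr mulrn_wge0 // mulr_ge0.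
Qed.

Lemma phi_le1 (e v : R) : 0 < e -> `|phi e v| <= 1.
Proof.
move=> e0; rewrite /phi normrM normrV ?unitfE ?gt_eqF ?Phi_gt0 //.
rewrite (gtr0_norm (Phi_gt0 v e0)) ler_pdivrMr ?Phi_gt0 // mul1r.
exact/Phi_ge/ltW.
Qed.

Lemma phip_ge0 (e v : R) : 0 < e -> 0 <= phip e v.
Proof. by move=> e0; rewrite /phip divr_ge0 ?sqr_ge0 // exprn_ge0 // ltW ?Phi_gt0. Qed.

Lemma hh_ge0 (e v : R) : 0 < e -> 0 <= hh e v.
Proof. by move=> e0; rewrite /hh divr_ge0 ?sqr_ge0 // ltW ?Phi_gt0. Qed.

Lemma hh_le (e v : R) : 0 < e -> hh e v <= e.
Proof.
move=> e0; rewrite /hh ler_pdivrMr ?Phi_gt0 // expr2 ler_pM2l //.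
rewrite /Phi; have {1}<- : Num.sqrt (e ^+ 2) = e by rewrite sqrtr_sqr ger0_norm // ltW.
by apply: ler_wsqrtr; rewrite lerDr sqr_ge0.
Qed.

Lemma phip_cont (e v : R) : 0 < e -> {for v, continuous (phip e)}.
Proof.
move=> e0; rewrite /phip /continuous_at.
have hP := is_derive_cont (is_derive_Phi v e0).
apply: cvgM; first exact: cvg_cst.
apply: cvgV; first by rewrite expf_eq0 /= gt_eqF // Phi_gt0.
by rewrite /= !exprS expr0 !mulr1; apply: cvgM => //; apply: cvgM.
Qed.

Lemma jbound (F : R -> R -> R) a b c d :
  (forall x t, a <= x <= b -> c <= t <= d -> jcont F x t) ->
  exists M, forall x t, a <= x <= b -> c <= t <= d -> `|F x t| <= M.
Proof.
move=> hF.
pose A : set (R * R) := `[a, b] `*` `[c, d].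
have cA : compact A by apply: compact_setX; exact: segment_compact.
have cf : {within A, continuous (fun p : R * R => F p.1 p.2)}.
  apply: continuous_in_subspaceT => -[x t] /set_mem [/= hx ht].
  by apply: hF; [move: hx | move: ht]; rewrite in_itv.
have /compact_bounded[M [_ HM]] := continuous_compact cf cA.
exists (M + 1) => x t hx ht; apply: (HM (M + 1)); first by rewrite ltrDl.
by exists (x, t) => //; split; rewrite /= in_itv/=.
Qed.

Section JC.
Implicit Types F G : R -> R -> R.

Lemma jcont_x F x t : jcont F x t -> {for x, continuous (fun y => F y t)}.
Proof.
move=> h; rewrite /continuous_at.
have : (fun y : R => (y, t)) @ x --> (x, t).
  exact: (@cvg_pair _ _ _ _ _ _ _ _ _ (fun y : R => y) (fun=> t) cvg_id (cvg_cst t)).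
move=> hp; exact: (cvg_comp _ _ hp h).
Qed.

Lemma jcont_t F x t : jcont F x t -> {for t, continuous (F x)}.
Proof.
move=> h; rewrite /continuous_at.
have : (fun s : R => (x, s)) @ t --> (x, t).
  exact: (@cvg_pair _ _ _ _ _ _ _ _ _ (fun=> x) (fun y : R => y) (cvg_cst x) cvg_id).
move=> hp; exact: (cvg_comp _ _ hp h).
Qed.

Lemma jcontD F G x t : jcont F x t -> jcont G x t ->
  jcont (fun a b => F a b + G a b) x t.
Proof. by move=> hF hG; apply: cvgD. Qed.

Lemma jcontB F G x t : jcont F x t -> jcont G x t ->
  jcont (fun a b => F a b - G a b) x t.
Proof. by move=> hF hG; apply: cvgB. Qed.

Lemma jcontM F G x t : jcont F x t -> jcont G x t ->
  jcont (fun a b => F a b * G a b) x t.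
Proof. by move=> hF hG; apply: cvgM. Qed.

Lemma jcont_cst (c x t : R) : jcont (fun (_ _ : R) => c) x t.
Proof. exact: cvg_cst. Qed.

Lemma jcont_fst (x t : R) : jcont (fun (a _ : R) => a) x t.
Proof. exact: cvg_fst. Qed.

Lemma jcont_comp (g : R -> R) F x t : {for F x t, continuous g} ->
  jcont F x t -> jcont (fun a b => g (F a b)) x t.
Proof. by move=> hg hF; exact: (cvg_comp _ _ hF hg). Qed.
End JC.

Notation mu := (@lebesgue_measure R).

Lemma cont_int (f : R -> R) (a b : R) :
  (forall x, a <= x <= b -> {for x, continuous f}) ->
  mu.-integrable `[a, b] (EFin \o f).
Proof.
move=> hf; apply: continuous_compact_integrable; first exact: segment_compact.
apply: continuous_in_subspaceT => x /set_mem; rewrite /= in_itv /= => hx.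
exact: hf.
Qed.

Lemma ftc_wrap (F f : R -> R) (a b : R) : a < b ->
  (forall x, a <= x <= b -> is_derive x 1 F (f x)) ->
  (forall x, a <= x <= b -> {for x, continuous f}) ->
  \int[mu]_(x in `[a, b]) f x = F b - F a.
Proof.
move=> ab hF hf.
have hab : a <= a <= b by rewrite lexx ltW.
have hbb : a <= b <= b by rewrite lexx ltW.
rewrite /Rintegral (@continuous_FTC2 _ f F a b ab) //.
- apply: continuous_in_subspaceT => x /set_mem; rewrite /= in_itv /= => hx.
  exact: hf.
- split.
  + move=> x; rewrite in_itv /= => /andP[h1 h2].
    by have [] := hF x ltac:(rewrite !ltW).
  + apply: cvg_at_right_filter; exact: (is_derive_cont (hF a hab)).
  + apply: cvg_at_left_filter; exact: (is_derive_cont (hF b hbb)).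
- move=> x; rewrite in_itv /= => /andP[h1 h2].
  have := hF x ltac:(rewrite !ltW //).
  by move=> H; rewrite derive1E derive_val.
Qed.

Lemma int_le (f g : R -> R) (a b : R) :
  (forall x, a <= x <= b -> {for x, continuous f}) ->
  (forall x, a <= x <= b -> {for x, continuous g}) ->
  (forall x, a <= x <= b -> f x <= g x) ->
  \int[mu]_(x in `[a, b]) f x <= \int[mu]_(x in `[a, b]) g x.
Proof.
move=> hf hg fg; apply: le_Rintegral => //; try exact: cont_int.
Qed.

Lemma int_add (f g : R -> R) (a b : R) :
  (forall x, a <= x <= b -> {for x, continuous f}) ->
  (forall x, a <= x <= b -> {for x, continuous g}) ->
  \int[mu]_(x in `[a, b]) (f x + g x) =
  \int[mu]_(x in `[a, b]) f x + \int[mu]_(x in `[a, b]) g x.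
Proof. by move=> hf hg; apply: RintegralD => //; exact: cont_int. Qed.

Lemma int_cst (c a b : R) : a <= b ->
  \int[mu]_(x in `[a, b]) c = c * (b - a).
Proof.
move=> ab; rewrite Rintegral_cst //.
have := lebesgue_measure_itv `[a, b]; rewrite /= => ->.
case: ifPn => h; first by rewrite -EFinB.
have -> : b = a by apply/eqP; rewrite eq_le ab leNgt /= -(lte_fin) h.
by rewrite subrr mulr0.
Qed.
End K.

Section Main.
Variable R : realType.
Variables n m : R -> R -> R.
Hypothesis Cn : C21 n.
Hypothesis Cm : C21 m.
Hypothesis Pn : forall x t : R, 0 < x -> 0 < t -> dt n x t = derive1 (fun y => J n y t) x.
Hypothesis Pm : forall x t : R, 0 < x -> 0 < t -> dt m x t = derive1 (fun y => J m y t) x.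

Definition w x t := n x t - m x t.
Definition wx x t := dx n x t - dx m x t.
Definition wt x t := dt n x t - dt m x t.
Definition DJ x t := J n x t - J m x t.
Definition bb (x t : R) := x ^+ 2 - 2 * x + n x t + m x t.
Definition bx (x t : R) := 2 * x - 2 + dx n x t + dx m x t.

Lemma DJ_eq (x t : R) : DJ x t = x ^+ 2 * wx x t + bb x t * w x t.
Proof. rewrite /DJ /J /wx /bb /w; ring. Qed.

Lemma isd_der (f : R -> R) (x df : R) : is_derive x 1 f df -> derivable f x 1.
Proof. by case. Qed.

Lemma isd_val (f : R -> R) (x df : R) : is_derive x 1 f df -> 'D_1 f x = df.
Proof. by case. Qed.

Section Gen.
Variable u : R -> R -> R.
Hypothesis Cu : C21 u.
Hypothesis Pu : forall x t : R, 0 < x -> 0 < t -> dt u x t = derive1 (fun y => J u y t) x.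

Lemma du_x (x t : R) : 0 < x -> 0 < t -> is_derive x 1 (fun y => u y t) (dx u x t).
Proof.
move=> x0 t0; have [h _ _ _ _] := Cu x0 t0.
by rewrite /dx derive1E; exact: derivableP.
Qed.

Lemma ddu_x (x t : R) : 0 < x -> 0 < t -> is_derive x 1 (fun y => dx u y t) (dx (dx u) x t).
Proof.
move=> x0 t0; have [_ h _ _ _] := Cu x0 t0.
by rewrite [X in is_derive _ _ _ X]/dx derive1E; exact: derivableP.
Qed.

Lemma du_t (x t : R) : 0 < x -> 0 < t -> is_derive t 1 (u x) (dt u x t).
Proof.
move=> x0 t0; have [_ _ h _ _] := Cu x0 t0.
by rewrite /dt derive1E; exact: derivableP.
Qed.

Lemma dJ_x (x t : R) : 0 < x -> 0 < t -> is_derive x 1 (fun y => J u y t) (dt u x t).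
Proof.
move=> x0 t0.
have h1 := du_x x0 t0.
have h2 := ddu_x x0 t0.
have hJ : derivable (fun y => J u y t) x 1.
  have -> : (fun y => J u y t) =
     ((fun y => y ^+ 2) * (fun y => dx u y t) +
      (fun y => y ^+ 2 - 2 * y) * (fun y => u y t) +
      (fun y => u y t) * (fun y => u y t))%R.
    by apply/funext => y; rewrite /J /= expr2.
  apply: derivableD; first apply: derivableD.
  - by apply: derivableM; [exact: exprn_derivable | exact: isd_der h2].
  - apply: derivableM; last exact: isd_der h1.
    apply: derivableB; first exact: exprn_derivable.
    by apply: derivableM; [exact: derivable_cst | exact: derivable_id].
  - by apply: derivableM; exact: isd_der h1.
by rewrite (Pu x0 t0) derive1E; exact: derivableP.
Qed.

Lemma jc_u (x t : R) : 0 < x -> 0 < t -> jcont u x t.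
Proof. by move=> x0 t0; have [_ _ _ [h _] _] := Cu x0 t0. Qed.
Lemma jc_dxu (x t : R) : 0 < x -> 0 < t -> jcont (dx u) x t.
Proof. by move=> x0 t0; have [_ _ _ [_ h] _] := Cu x0 t0. Qed.
Lemma jc_dtu (x t : R) : 0 < x -> 0 < t -> jcont (dt u) x t.
Proof. by move=> x0 t0; have [_ _ _ _ [_ h]] := Cu x0 t0. Qed.

Lemma jc_Ju (x t : R) : 0 < x -> 0 < t -> jcont (J u) x t.
Proof.
move=> x0 t0; rewrite /J.
have hu := jc_u x0 t0; have hd := jc_dxu x0 t0.
have hx : jcont (fun (a _ : R) => a) x t by exact: jcont_fst.
have hx2 : jcont (fun (a _ : R) => a ^+ 2) x t by exact: (jcontM hx hx).
apply: jcontD; first apply: jcontD.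
- by apply: jcontM.
- apply: jcontM => //; apply: jcontB => //.
  by apply: jcontM => //; exact: jcont_cst.
- exact: (jcontM hu hu).
Qed.
End Gen.

Lemma dw_x (x t : R) : 0 < x -> 0 < t -> is_derive x 1 (fun y => w y t) (wx x t).
Proof. move=> x0 t0; exact: (is_deriveB (du_x Cn x0 t0) (du_x Cm x0 t0)). Qed.

Lemma dw_t (x t : R) : 0 < x -> 0 < t -> is_derive t 1 (w x) (wt x t).
Proof. move=> x0 t0; exact: (is_deriveB (du_t Cn x0 t0) (du_t Cm x0 t0)). Qed.

Lemma dDJ_x (x t : R) : 0 < x -> 0 < t -> is_derive x 1 (fun y => DJ y t) (wt x t).
Proof. move=> x0 t0; exact: (is_deriveB (dJ_x Cn Pn x0 t0) (dJ_x Cm Pm x0 t0)). Qed.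

Lemma dbb_x (x t : R) : 0 < x -> 0 < t -> is_derive x 1 (fun y => bb y t) (bx x t).
Proof.
move=> x0 t0.
have h1 := du_x Cn x0 t0; have h2 := du_x Cm x0 t0.
have h3 : is_derive x 1 (fun y : R => y ^+ 2 - 2 * y) (2 * x - 2).
  by apply: is_derive_eq; rewrite /GRing.scale /= !mulr1 mulr2n mulrDl mul1r.
have := is_deriveD (is_deriveD h3 h2) h1.
move=> H.
have -> : (fun y => bb y t) =
  ((fun y : R => y ^+ 2 - 2 * y) + (fun y => m y t) + (fun y => n y t))%R.
  by apply/funext => y; rewrite /bb !fctE; ring.
by apply: (is_derive_eq H); rewrite /bx; ring.
Qed.

Lemma jc_w (x t : R) : 0 < x -> 0 < t -> jcont w x t.
Proof. move=> x0 t0; exact: (jcontB (jc_u Cn x0 t0) (jc_u Cm x0 t0)). Qed.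
Lemma jc_wx (x t : R) : 0 < x -> 0 < t -> jcont wx x t.
Proof. move=> x0 t0; exact: (jcontB (jc_dxu Cn x0 t0) (jc_dxu Cm x0 t0)). Qed.
Lemma jc_wt (x t : R) : 0 < x -> 0 < t -> jcont wt x t.
Proof. move=> x0 t0; exact: (jcontB (jc_dtu Cn x0 t0) (jc_dtu Cm x0 t0)). Qed.
Lemma jc_DJ (x t : R) : 0 < x -> 0 < t -> jcont DJ x t.
Proof. move=> x0 t0; exact: (jcontB (jc_Ju Cn x0 t0) (jc_Ju Cm x0 t0)). Qed.
Lemma jc_bb (x t : R) : 0 < x -> 0 < t -> jcont bb x t.
Proof.
move=> x0 t0; have hx : jcont (fun (a _ : R) => a) x t by exact: jcont_fst.
change (jcont (fun a b => (a ^+ 2 - 2 * a + n a b) + m a b) x t).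
apply: jcontD; last by move: (jc_u Cm x0 t0).
apply: jcontD; last by move: (jc_u Cn x0 t0).
apply: jcontB; first exact: (jcontM hx hx).
by apply: jcontM => //; exact: jcont_cst.
Qed.
Lemma jc_bx (x t : R) : 0 < x -> 0 < t -> jcont bx x t.
Proof.
move=> x0 t0; have hx : jcont (fun (a _ : R) => a) x t by exact: jcont_fst.
change (jcont (fun a b => (2 * a - 2 + dx n a b) + dx m a b) x t).
apply: jcontD; last by move: (jc_dxu Cm x0 t0).
apply: jcontD; last by move: (jc_dxu Cn x0 t0).
apply: jcontB; last exact: jcont_cst.
by apply: jcontM => //; exact: jcont_cst.
Qed.

Notation mu := (@lebesgue_measure R).

Lemma cont_x (F : R -> R -> R) (y tau : R) :
  jcont F y tau -> {for y, continuous (fun z => F z tau)}.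
Proof. exact: jcont_x. Qed.

Lemma space_ineq (e tau r Rr Mb Mbx : R) : 0 < e -> 0 < tau -> 0 < r -> r < Rr ->
  (forall x, r <= x <= Rr -> `|bx x tau| <= Mbx) ->
  `|bb Rr tau| <= Mb -> `|bb r tau| <= Mb ->
  \int[mu]_(x in `[r, Rr]) (phi e (w x tau) * wt x tau) <=
  phi e (w Rr tau) * DJ Rr tau - phi e (w r tau) * DJ r tau
    + e * (2 * Mb + (Rr - r) * Mbx).
Proof.
move=> e0 tau0 r0 rR hbx hbR hbr.
pose K y := phi e (w y tau) * DJ y tau + bb y tau * hh e (w y tau).
pose k y := phip e (w y tau) * wx y tau * DJ y tau + phi e (w y tau) * wt y tau
  + (bx y tau * hh e (w y tau) + bb y tau * (- (phip e (w y tau) * w y tau) * wx y tau)).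
have pos (y : R) : r <= y <= Rr -> 0 < y by case/andP => h _; exact: lt_le_trans h.
have dphi (y : R) : 0 < y -> is_derive y 1 (fun z => phi e (w z tau)) (phip e (w y tau) * wx y tau).
  move=> y0; exact: (is_derive_comp1 (dw_x y0 tau0) (is_derive_phi _ e0)).
have dhh (y : R) : 0 < y -> is_derive y 1 (fun z => hh e (w z tau))
    (- (phip e (w y tau) * w y tau) * wx y tau).
  move=> y0; exact: (is_derive_comp1 (dw_x y0 tau0) (is_derive_hh _ e0)).
have dK (y : R) : r <= y <= Rr -> is_derive y 1 K (k y).
  move=> /pos y0.
  have H := is_deriveD (is_deriveM (dphi y y0) (dDJ_x y0 tau0))
                       (is_deriveM (dbb_x y0 tau0) (dhh y y0)).
  have -> : K = ((fun z => phi e (w z tau)) * (fun z => DJ z tau) +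
                 (fun z => bb z tau) * (fun z => hh e (w z tau)))%R.
    by apply/funext => z; rewrite /K !fctE.
  by apply: (is_derive_eq H); rewrite /k /GRing.scale /=; ring.
have ck (y : R) : r <= y <= Rr -> {for y, continuous k}.
  move=> /pos y0.
  have cw := cont_x (jc_w y0 tau0).
  have cwx := cont_x (jc_wx y0 tau0).
  have cwt := cont_x (jc_wt y0 tau0).
  have cD := cont_x (jc_DJ y0 tau0).
  have cb := cont_x (jc_bb y0 tau0).
  have cbx := cont_x (jc_bx y0 tau0).
  have cphi := is_derive_cont (dphi y y0).
  have chh := is_derive_cont (dhh y y0).
  have cphip : {for y, continuous (fun z => phip e (w z tau))}.
    by move: (continuous_comp cw (@phip_cont R e (w y tau) e0)).
  rewrite /k /continuous_at.
  apply: cvgD; first apply: cvgD.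
  - by apply: cvgM => //; apply: cvgM.
  - by apply: cvgM.
  - apply: cvgD; first by apply: cvgM.
    apply: cvgM => //; apply: cvgM => //; apply: cvgN; apply: cvgM => //.
have cbxa (y : R) : r <= y <= Rr -> {for y, continuous (fun z => e * `|bx z tau|)}.
  move=> /pos y0; have cbx := cont_x (jc_bx y0 tau0).
  apply: cvgM; first exact: cvg_cst.
  exact: (continuous_comp cbx (@norm_continuous _ R^o _)).
have cl (y : R) : r <= y <= Rr -> {for y, continuous (fun z => phi e (w z tau) * wt z tau)}.
  move=> /pos y0; have cwt := cont_x (jc_wt y0 tau0).
  by apply: cvgM => //; exact: is_derive_cont (dphi y y0).
have h1 : \int[mu]_(x in `[r, Rr]) (phi e (w x tau) * wt x tau) <=
          \int[mu]_(x in `[r, Rr]) (k x + e * `|bx x tau|).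
  apply: int_le => //.
    by move=> y hy; apply: cvgD; [exact: ck | exact: cbxa].
  move=> y hy; rewrite /k DJ_eq.
  have P0 := @phip_ge0 R e (w y tau) e0.
  have H0 := @hh_ge0 R e (w y tau) e0.
  have H1 := @hh_le R e (w y tau) e0.
  set P := phip e (w y tau) in P0 *; set H := hh e (w y tau) in H0 H1 *.
  set B := bx y tau; set X := wx y tau.
  have q1 : 0 <= P * (y ^+ 2 * X ^+ 2) by rewrite mulr_ge0 // mulr_ge0 // sqr_ge0.
  have q2 : 0 <= (`|B| + B) * H.
    by rewrite mulr_ge0 // -lerBlDr sub0r; rewrite -normrN ler_norm.
  have q3 : 0 <= `|B| * (e - H) by rewrite mulr_ge0 // subr_ge0.
  have -> : P * X * (y ^+ 2 * X + bb y tau * w y tau) + phi e (w y tau) * wt y tau +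
      (B * H + bb y tau * (- (P * w y tau) * X)) + e * `|B| =
      phi e (w y tau) * wt y tau + (P * (y ^+ 2 * X ^+ 2) + (`|B| + B) * H + `|B| * (e - H)).
    by ring.
  by rewrite lerDl addr_ge0 // addr_ge0.
have h2 : \int[mu]_(x in `[r, Rr]) (k x + e * `|bx x tau|) =
   \int[mu]_(x in `[r, Rr]) k x + \int[mu]_(x in `[r, Rr]) (e * `|bx x tau|).
  exact: int_add.
have h3 : \int[mu]_(x in `[r, Rr]) k x = K Rr - K r by apply: ftc_wrap.
have h4 : \int[mu]_(x in `[r, Rr]) (e * `|bx x tau|) <= e * Mbx * (Rr - r).
  rewrite -int_cst; last exact: ltW.
  apply: int_le => //.
    by move=> y _; exact: cvg_cst.
  by move=> y hy; rewrite ler_pM2l // hbx.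
have h5 (y : R) : `|bb y tau| <= Mb -> `|bb y tau * hh e (w y tau)| <= Mb * e.
  move=> hb; rewrite normrM; apply: ler_pM => //.
  by rewrite ger0_norm; [exact: hh_le | exact: hh_ge0].
have /ler_normlP[h5a h5b] := h5 _ hbR.
have /ler_normlP[h6a h6b] := h5 _ hbr.
rewrite /K in h3.
rewrite h2 h3 in h1.
lra.
Qed.

Definition beta (e r Rr : R) (sg : R) :=
  phi e (w Rr sg) * DJ Rr sg - phi e (w r sg) * DJ r sg.

Lemma Xderiv (e r Rr a c Mwt tau : R) : 0 < e -> 0 < r -> r < Rr -> 0 < a -> a < tau -> tau < c ->
  (forall x sg, r <= x <= Rr -> a <= sg <= c -> `|wt x sg| <= Mwt) ->
  is_derive tau 1 (fun sg => \int[mu]_(x in `[r, Rr]) Phi e (w x sg))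
     (\int[mu]_(x in `[r, Rr]) (phi e (w x tau) * wt x tau)).
Proof.
move=> e0 r0 rR a0 atau tauc hM.
pose f := fun sg x => Phi e (w x sg).
have mB : measurable (`[r, Rr] : set R) by [].
have Ia : `]a, c[%classic tau by rewrite /= in_itv /= atau tauc.
have posx (x : R) : `[r, Rr]%classic x -> 0 < x.
  by rewrite /= in_itv /= => /andP[h _]; exact: lt_le_trans h.
have posI (sg : R) : `]a, c[%classic sg -> 0 < sg.
  by rewrite /= in_itv /= => /andP[h _]; exact: lt_trans h.
have intf : forall sg, `]a, c[%classic sg -> mu.-integrable `[r, Rr] (EFin \o f sg).
  move=> sg /posI sg0; apply: cont_int => x hx.
  have x0 : 0 < x by apply: posx; rewrite /= in_itv.
  exact: (continuous_comp (cont_x (jc_w x0 sg0)) (is_derive_cont (@is_derive_Phi R e (w x sg) e0))).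
have dd (sg x : R) : 0 < sg -> 0 < x ->
    is_derive sg 1 (fun z => f z x) (phi e (w x sg) * wt x sg).
  move=> sg0 x0; exact: (is_derive_comp1 (dw_t x0 sg0) (@is_derive_Phi R e (w x sg) e0)).
have derf1 : forall sg x, `]a, c[%classic sg -> `[r, Rr]%classic x -> derivable (fun z => f z x) sg 1.
  by move=> sg x /posI sg0 /posx x0; case: (dd sg x sg0 x0).
have Mwt0 : 0 <= Mwt.
  apply: le_trans (hM r a _ _); first exact: normr_ge0.
    by rewrite lexx ltW.
  by rewrite lexx ltW // (lt_trans atau tauc).
have G_ge0 : forall x : R, 0 <= (fun _ => Mwt) x by [].
have intG : mu.-integrable `[r, Rr] (EFin \o (fun _ : R => Mwt)).
  by apply: cont_int => x _; exact: cvg_cst.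
have G_ub : forall sg x, `]a, c[%classic sg -> `[r, Rr]%classic x ->
    `|partial1of2 f sg x| <= (fun _ => Mwt) x.
  move=> sg x hsg hx; have sg0 := posI _ hsg; have x0 := posx _ hx.
  rewrite /partial1of2 derive1E (isd_val (dd sg x sg0 x0)) normrM.
  rewrite -[Mwt]mul1r; apply: ler_pM => //; first exact: phi_le1.
  apply: hM; first by move: hx; rewrite /= in_itv.
  by move: hsg; rewrite /= in_itv /= => /andP[h1 h2]; rewrite !ltW.
have D1 := @differentiation_under_integral R _ _ mu f _ mB tau a c Ia intf derf1 _ G_ge0 intG G_ub.
have D2 := @derivable_under_integral R _ _ mu f _ mB tau a c Ia intf derf1 _ G_ge0 intG G_ub.
apply: DeriveDef; first exact: D2.
rewrite -derive1E D1; apply: eq_Rintegral => x hx.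
have x0 : 0 < x by apply: posx; move: hx; rewrite inE.
by rewrite /partial1of2 derive1E (isd_val (dd tau x (lt_trans a0 atau) x0)).
Qed.

Lemma beta_cont (e r Rr sg : R) : 0 < e -> 0 < r -> r < Rr -> 0 < sg ->
  {for sg, continuous (beta e r Rr)}.
Proof.
move=> e0 r0 rR sg0.
have R0 : 0 < Rr := lt_trans r0 rR.
have cphi (x : R) : 0 < x -> {for sg, continuous (fun z => phi e (w x z))}.
  move=> x0; apply: (continuous_comp (jcont_t (jc_w x0 sg0))).
  exact: is_derive_cont (@is_derive_phi R e (w x sg) e0).
rewrite /beta /continuous_at; apply: cvgB; apply: cvgM.
- exact: cphi.
- exact: jcont_t (jc_DJ R0 sg0).
- exact: cphi.
- exact: jcont_t (jc_DJ r0 sg0).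
Qed.

Lemma time_ineq (e r Rr s t a c Mb Mbx Mwt : R) : 0 < e -> 0 < r -> r < Rr ->
  0 < a -> a < s -> s < t -> t < c ->
  (forall x sg, r <= x <= Rr -> s <= sg <= t -> `|bx x sg| <= Mbx) ->
  (forall x sg, r <= x <= Rr -> s <= sg <= t -> `|bb x sg| <= Mb) ->
  (forall x sg, r <= x <= Rr -> a <= sg <= c -> `|wt x sg| <= Mwt) ->
  \int[mu]_(x in `[r, Rr]) Phi e (w x t) <=
  \int[mu]_(x in `[r, Rr]) Phi e (w x s) + \int[mu]_(sg in `[s, t]) beta e r Rr sg
    + e * (2 * Mb + (Rr - r) * Mbx) * (t - s).
Proof.
move=> e0 r0 rR a0 a_s st tc hbx hbb hwt.
set C := 2 * Mb + (Rr - r) * Mbx.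
pose X sg := \int[mu]_(x in `[r, Rr]) Phi e (w x sg).
pose Bd sg := \int[mu]_(z in `[s, sg]) beta e r Rr z.
pose g sg := X sg - Bd sg - e * C * sg.
have s0 : 0 < s := lt_trans a0 a_s.
have ib : mu.-integrable `[s, t] (EFin \o beta e r Rr).
  apply: cont_int => x /andP[h _]; apply: beta_cont => //.
  exact: lt_le_trans h.
have dX (sg : R) : s <= sg <= t -> is_derive sg 1 X
    (\int[mu]_(x in `[r, Rr]) (phi e (w x sg) * wt x sg)).
  move=> /andP[h1 h2]; apply: (@Xderiv e r Rr a c Mwt) => //.
    exact: lt_le_trans h1.
  exact: le_lt_trans tc.
have dg (sg : R) : s < sg < t -> is_derive sg 1 g
    (\int[mu]_(x in `[r, Rr]) (phi e (w x sg) * wt x sg) - beta e r Rr sg - e * C).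
  move=> /andP[h1 h2].
  have [dB vB] := @continuous_FTC1_closed R (beta e r Rr) s sg t h2 ib h1
    (beta_cont e0 r0 rR (lt_trans s0 h1)).
  have HB : is_derive sg 1 Bd (beta e r Rr sg).
    by apply: DeriveDef; [exact: dB | rewrite -derive1E vB].
  have HL : is_derive sg 1 (fun z : R => e * C * z) (e * C).
    by apply: is_derive_eq; rewrite /GRing.scale /= mulr1.
  have H := is_deriveB (is_deriveB (dX sg ltac:(by rewrite !ltW)) HB) HL.
  exact: H.
have Hd : forall x, x \in `]s, t[ -> derivable g x 1.
  by move=> x; rewrite in_itv /= => /dg [].
have Hle : forall x, x \in `]s, t[ -> derive1 g x <= 0.
  move=> x; rewrite in_itv /= => hx; rewrite derive1E (isd_val (dg x hx)).
  case/andP: hx => h1 h2.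
  have x0 : 0 < x := lt_trans s0 h1.
  have hxI : s <= x <= t by rewrite !ltW.
  have := @space_ineq e x r Rr Mb Mbx e0 x0 r0 rR
     (fun y hy => hbx y x hy hxI)
     (hbb Rr x ltac:(by rewrite lexx ltW) hxI)
     (hbb r x ltac:(by rewrite lexx ltW) hxI).
  rewrite /beta -/C => H.
  rewrite subr_le0 lerBlDr; apply: (le_trans H); rewrite /beta.
  by rewrite addrC.
have hXc : {within `[s, t], continuous X}.
  apply: continuous_in_subspaceT => x; rewrite inE /= in_itv /= => hx.
  exact: is_derive_cont (dX x hx).
have hBc : {within `[s, t], continuous Bd}.
  exact: (parameterized_integral_continuous (ltW st) ib).
have hLc : {within `[s, t], continuous (fun z : R => e * C * z)}.
  apply: continuous_subspaceT => x; apply: cvgM; [exact: cvg_cst | exact: cvg_id].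
have Hc : {within `[s, t], continuous g}.
  by move=> x; apply: cvgB; [apply: cvgB; [exact: hXc | exact: hBc] | exact: hLc].
have tin : t \in `[s, t] by rewrite in_itv /= lexx ltW.
have sin : s \in `[s, t] by rewrite in_itv /= lexx ltW.
have := @ler0_derive1_le_cc R g s t Hd Hle Hc t s tin sin (ltW st).
rewrite /g /Bd.
have -> : \int[mu]_(z in `[s, s]) beta e r Rr z = 0.
  by rewrite set_itv1 Rintegral_set1.
rewrite -/(X t) -/(X s) => H.
rewrite -[e * C * (t - s)]/(e * C * (t - s)).
have E : e * C * (t - s) = e * C * t - e * C * s by ring.
rewrite E; lra.
Qed.

Lemma cphiw (e x0 sg : R) : 0 < e -> 0 < x0 -> 0 < sg ->
  {for sg, continuous (fun z => phi e (w x0 z) * DJ x0 z)}.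
Proof.
move=> e0 x00 sg0; apply: cvgM; last exact: jcont_t (jc_DJ x00 sg0).
apply: (continuous_comp (jcont_t (jc_w x00 sg0))).
exact: is_derive_cont (@is_derive_phi R e (w x0 sg) e0).
Qed.

Lemma eps_ineq (e r Rr s t a c Mb Mbx Mwt : R) : 0 < e -> 0 < r -> r < Rr ->
  0 < a -> a < s -> s < t -> t < c ->
  (forall x sg, r <= x <= Rr -> s <= sg <= t -> `|bx x sg| <= Mbx) ->
  (forall x sg, r <= x <= Rr -> s <= sg <= t -> `|bb x sg| <= Mb) ->
  (forall x sg, r <= x <= Rr -> a <= sg <= c -> `|wt x sg| <= Mwt) ->
  \int[mu]_(x in `[r, Rr]) `|w x t| +
    \int[mu]_(sg in `[s, t]) (phi e (w r sg) * DJ r sg) <=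
  \int[mu]_(x in `[r, Rr]) `|w x s| +
    \int[mu]_(sg in `[s, t]) (phi e (w Rr sg) * DJ Rr sg)
    + e * ((Rr - r) + (2 * Mb + (Rr - r) * Mbx) * (t - s)).
Proof.
move=> e0 r0 rR a0 a_s st tc hbx hbb hwt.
have H := time_ineq e0 r0 rR a0 a_s st tc hbx hbb hwt.
have s0 : 0 < s := lt_trans a0 a_s.
have t0 : 0 < t := lt_trans s0 st.
have posx (x : R) : r <= x <= Rr -> 0 < x.
  by case/andP => h _; exact: lt_le_trans h.
have posg (sg : R) : s <= sg <= t -> 0 < sg.
  by case/andP => h _; exact: lt_le_trans h.
have cabs (tau : R) : 0 < tau -> forall x, r <= x <= Rr ->
    {for x, continuous (fun z => `|w z tau|)}.
  move=> tau0 x /posx x0.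
  exact: (continuous_comp (cont_x (jc_w x0 tau0)) (@norm_continuous _ R^o _)).
have cPhi (tau : R) : 0 < tau -> forall x, r <= x <= Rr ->
    {for x, continuous (fun z => Phi e (w z tau))}.
  move=> tau0 x /posx x0.
  exact: (continuous_comp (cont_x (jc_w x0 tau0))
            (is_derive_cont (@is_derive_Phi R e (w x tau) e0))).
have h1 : \int[mu]_(x in `[r, Rr]) `|w x t| <= \int[mu]_(x in `[r, Rr]) Phi e (w x t).
  apply: int_le; [exact: cabs | exact: cPhi | move=> x _; exact/Phi_ge/ltW].
have h2 : \int[mu]_(x in `[r, Rr]) Phi e (w x s) <=
    \int[mu]_(x in `[r, Rr]) (`|w x s| + e).
  apply: int_le; [exact: cPhi | | move=> x _; exact/Phi_le/ltW].
  by move=> x hx; apply: cvgD; [exact: cabs | exact: cvg_cst].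
have h3 : \int[mu]_(x in `[r, Rr]) (`|w x s| + e) =
    \int[mu]_(x in `[r, Rr]) `|w x s| + e * (Rr - r).
  rewrite int_add; [by rewrite int_cst // ltW | exact: cabs |].
  by move=> x _; exact: cvg_cst.
have h4 : \int[mu]_(sg in `[s, t]) beta e r Rr sg =
    \int[mu]_(sg in `[s, t]) (phi e (w Rr sg) * DJ Rr sg) -
    \int[mu]_(sg in `[s, t]) (phi e (w r sg) * DJ r sg).
  rewrite /beta RintegralB //.
  - apply: cont_int => x /posg x0; exact: cphiw (lt_trans r0 rR) x0.
  - apply: cont_int => x /posg x0; exact: cphiw r0 x0.
rewrite h3 h4 in h2 H.
set C := 2 * Mb + (Rr - r) * Mbx in H *.
have E : e * (Rr - r + C * (t - s)) = e * (Rr - r) + e * C * (t - s) by ring.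
rewrite E; lra.
Qed.

Lemma sg_lim (v : R) : (fun k => phi (harmonic k) v) @ \oo --> Num.sg v.
Proof.
have [->|v0] := eqVneq v 0.
  rewrite sgr0 /phi; under eq_fun do rewrite mul0r; exact: cvg_cst.
have hs : (fun k => Phi (harmonic k) v) @ \oo --> `|v|.
  rewrite /Phi -sqrtr_sqr.
  have H : (fun k => v ^+ 2 + harmonic k ^+ 2 : R) @ \oo --> v ^+ 2.
    rewrite -[X in _ --> X]addr0; apply: cvgD; first exact: cvg_cst.
    have -> : (0 : R) = 0 * 0 by rewrite mulr0.
    by apply: cvgM; exact: cvg_harmonic.
  exact: (cvg_comp _ _ H (@sqrt_continuous R (v ^+ 2))).
rewrite /phi; have -> : Num.sg v = v / `|v|.
  by rewrite -{2}(mulr_sg_norm v) mulfK // normr_eq0.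
apply: cvgM; first exact: cvg_cst.
by apply: cvgV => //; rewrite normr_eq0.
Qed.

Lemma dct_lim (x0 s t : R) : 0 < x0 -> 0 < s -> s <= t ->
  mu.-integrable `[s, t] (EFin \o (fun sg => Num.sg (w x0 sg) * DJ x0 sg)) /\
  (fun k => \int[mu]_(sg in `[s, t]) (phi (harmonic k) (w x0 sg) * DJ x0 sg)) @ \oo
     --> \int[mu]_(sg in `[s, t]) (Num.sg (w x0 sg) * DJ x0 sg).
Proof.
move=> x00 s0 st.
have posg (sg : R) : s <= sg <= t -> 0 < sg.
  by case/andP => h _; exact: lt_le_trans h.
pose f_ k := EFin \o (fun sg => phi (harmonic k) (w x0 sg) * DJ x0 sg).
pose f := EFin \o (fun sg => Num.sg (w x0 sg) * DJ x0 sg).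
pose g := EFin \o (fun sg => `|DJ x0 sg|).
pose D : set (measurableTypeR R) := [set` `[s, t]].
have mD : measurable D by exact: measurable_itv.
have if_ k : mu.-integrable `[s, t] (f_ k).
  apply: cont_int => x /posg xp; exact: cphiw (harmonic_gt0 k) x00 xp.
have mf_ k := measurable_int mu (if_ k).
have cvf x : D x -> f_ ^~ x @ \oo --> f x.
  move=> _; rewrite /f_ /f /=; apply: cvg_EFin.
    by apply: nearW => k.
  by apply: cvgM; [exact: sg_lim | exact: cvg_cst].
have mf := measurable_realfun.emeasurable_fun_cvg f_ f mf_ cvf.
have f_f : {ae mu, forall x, D x -> f_ ^~ x @ \oo --> f x}.
  by apply: aeW => x; exact: cvf.
have ig : mu.-integrable `[s, t] g.
  apply: cont_int => x /posg xp.
  exact: (continuous_comp (jcont_t (jc_DJ x00 xp)) (@norm_continuous _ R^o _)).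
have f_g : {ae mu, forall x n, D x -> (`|f_ n x| <= g x)%E}.
  apply: aeW => x k _; rewrite /f_ /g /= lee_fin normrM.
  rewrite -[X in _ <= X]mul1r ler_pM //; exact: phi_le1 (harmonic_gt0 k).
have [intf _ lim] := @dominated_convergence _ _ _ mu D mD f_ f g mf_ mf f_f ig f_g.
split; first exact: intf.
have fin := integrable_fin_num mD intf.
rewrite -(fineK fin) in lim.
exact: (fine_cvg lim).
Qed.
End Main.

Section Final.
Variable R : realType.
Notation mu := (@lebesgue_measure R).

Lemma intRE (a b : R) (f : R -> R) : mu.-integrable `[a, b] (EFin \o f) ->
  (\int[mu]_(x in `[a, b]) (f x)%:E)%E = (\int[mu]_(x in `[a, b]) f x)%:E.
Proof. by move=> h; rewrite /Rintegral fineK //; exact: integrable_fin_num. Qed.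

Lemma lemma3p2_aux (T : R) (n m : R -> R -> R)
  (n0 m0 : R -> R) :
  0 < T ->
  kompaneets_solution n0 n -> kompaneets_solution m0 m ->
  Linfty_QT T n -> Linfty_QT T m ->
  x ^+ 2 * n0 x @[x --> +oo] --> 0 ->
  x ^+ 2 * m0 x @[x --> +oo] --> 0 ->
  forall r Rr s t : R, 0 < r -> r < Rr -> 0 < s -> s < t -> t <= T ->
  ((\int[@lebesgue_measure R]_(x in `[r, Rr]) (`|n x t - m x t|)%:E)
   + (\int[@lebesgue_measure R]_(tau in `[s, t])
        (Num.sg (n r tau - m r tau) * (J n r tau - J m r tau))%:E)
   <=
   (\int[@lebesgue_measure R]_(x in `[r, Rr]) (`|n x s - m x s|)%:E)
   + (\int[@lebesgue_measure R]_(tau in `[s, t])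
        (Num.sg (n Rr tau - m Rr tau) * (J n Rr tau - J m Rr tau))%:E))%E.
Proof.
move=> _ [_ Cn _ _ [Pn _]] [_ Cm _ _ [Pm _]] _ _ _ _ r Rr s t r0 rR s0 st _.
pose a := s / 2; pose c := t + 1.
have a0 : 0 < a by rewrite /a divr_gt0.
have a_s : a < s by rewrite /a ltr_pdivrMr // ltr_pMr // ltr1n.
have tc : t < c by rewrite /c ltrDl.
have R0 : 0 < Rr := lt_trans r0 rR.
have posx (x : R) : r <= x <= Rr -> 0 < x.
  by case/andP => h _; exact: lt_le_trans h.
have [Mbx hbx] : exists M, forall x sg, r <= x <= Rr -> s <= sg <= t -> `|bx n m x sg| <= M.
  apply: jbound => x sg hx /andP[h _]; apply: jc_bx => //; first exact: posx.
  exact: lt_le_trans h.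
have [Mb hbb] : exists M, forall x sg, r <= x <= Rr -> s <= sg <= t -> `|bb n m x sg| <= M.
  apply: jbound => x sg hx /andP[h _]; apply: jc_bb => //; first exact: posx.
  exact: lt_le_trans h.
have [Mwt hwt] : exists M, forall x sg, r <= x <= Rr -> a <= sg <= c -> `|wt n m x sg| <= M.
  apply: jbound => x sg hx /andP[h _]; apply: jc_wt => //; first exact: posx.
  exact: lt_le_trans h.
have key k := @eps_ineq R n m Cn Cm Pn Pm (harmonic k) r Rr s t a c Mb Mbx Mwt
  (harmonic_gt0 k) r0 rR a0 a_s st tc hbx hbb hwt.
have [ir lr] := dct_lim Cn Cm r0 s0 (ltW st).
have [iR lR] := dct_lim Cn Cm R0 s0 (ltW st).
set K0 := (Rr - r) + (2 * Mb + (Rr - r) * Mbx) * (t - s) in key.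
set At := \int[mu]_(x in `[r, Rr]) `|w n m x t|.
set As := \int[mu]_(x in `[r, Rr]) `|w n m x s|.
set Pr := \int[mu]_(sg in `[s, t]) (Num.sg (w n m r sg) * DJ n m r sg).
set PR := \int[mu]_(sg in `[s, t]) (Num.sg (w n m Rr sg) * DJ n m Rr sg).
have L1 : (fun k => At + \int[mu]_(sg in `[s, t]) (phi (harmonic k) (w n m r sg) * DJ n m r sg))
   @ \oo --> At + Pr.
  by apply: cvgD => //; exact: cvg_cst.
have L2 : (fun k => As + \int[mu]_(sg in `[s, t]) (phi (harmonic k) (w n m Rr sg) * DJ n m Rr sg)
   + harmonic k * K0) @ \oo --> As + PR + 0 * K0.
  apply: cvgD; first by apply: cvgD => //; exact: cvg_cst.
  by apply: cvgM; [exact: cvg_harmonic | exact: cvg_cst].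
have fin : At + Pr <= As + PR + 0 * K0.
  apply: (ler_cvg_to L1 L2); apply: nearW => k; exact: key.
rewrite mul0r addr0 in fin.
have iAt : mu.-integrable `[r, Rr] (EFin \o (fun x => `|n x t - m x t|)).
  apply: cont_int => x /posx x0.
  exact: (continuous_comp (cont_x (jc_w Cn Cm x0 (lt_trans s0 st))) (@norm_continuous _ R^o _)).
have iAs : mu.-integrable `[r, Rr] (EFin \o (fun x => `|n x s - m x s|)).
  apply: cont_int => x /posx x0.
  exact: (continuous_comp (cont_x (jc_w Cn Cm x0 s0)) (@norm_continuous _ R^o _)).
rewrite (intRE iAt) (intRE iAs) (intRE ir) (intRE iR) -!EFinD lee_fin.
exact: fin.
Qed.
End Final.

End Aux.

Theorem lemma3p2 (R : realType) (T : R) (n m : R -> R -> R)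
  (n0 m0 : R -> R) :
  0 < T ->
  kompaneets_solution n0 n -> kompaneets_solution m0 m ->
  Linfty_QT T n -> Linfty_QT T m ->
  x ^+ 2 * n0 x @[x --> +oo] --> 0 ->
  x ^+ 2 * m0 x @[x --> +oo] --> 0 ->
  forall r Rr s t : R, 0 < r -> r < Rr -> 0 < s -> s < t -> t <= T ->
  ((\int[@lebesgue_measure R]_(x in `[r, Rr]) (`|n x t - m x t|)%:E)
   + (\int[@lebesgue_measure R]_(tau in `[s, t])
        (Num.sg (n r tau - m r tau) * (J n r tau - J m r tau))%:E)
   <=
   (\int[@lebesgue_measure R]_(x in `[r, Rr]) (`|n x s - m x s|)%:E)
   + (\int[@lebesgue_measure R]_(tau in `[s, t])
        (Num.sg (n Rr tau - m Rr tau) * (J n Rr tau - J m Rr tau))%:E))%E.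
Proof. exact: @Aux.lemma3p2_aux. Qed.
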